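(* Let $n\in\mathbb{N}$ and $a_0,a_1,a_2\in\mathbb{R}$ with $a_0\neq0$, and suppose the roots $\lambda_1,\lambda_2$ of $a_0\lambda^2+a_1\lambda+a_2=0$ are real and nonzero. Then the equation $a_0\bm{x}''+a_1\bm{x}'+a_2\bm{x}=\bm{0}$ is Ulam stable on $\mathbb{R}$, and its minimum Ulam constant is $\dfrac{1}{|a_0\lambda_1\lambda_2|}$.
   Context: $\|\cdot\|$ is a norm on $\mathbb{C}^n$. Ulam stability: the equation $\alpha(t)\bm{x}''+\beta(t)\bm{x}'+\gamma(t)\bm{x}=\bm{f}(t)$ is Ulam stable on $I$ if there exists a constant $L>0$ such that for every $\varepsilon>0$ and every $\bm{\xi}\in C^2(I,\mathbb{C}^n)$ with $\sup_{t\in I}\|\alpha(t)\bm{\xi}''(t)+\beta(t)\bm{\xi}'(t)+\gamma(t)\bm{\xi}(t)-\bm{f}(t)\|\le\varepsilon$, there exists a solution $\bm{x}\in C^2(I,\mathbb{C}^n)$ of the equation with $\sup_{t\in I}\|\bm{\xi}(t)-\bm{x}(t)\|\le L\varepsilon$; such an $L$ is called an Ulam constant for the equation on $I$. The minimum Ulam constant is an Ulam constant $B$ such that no $L<B$ is an Ulam constant. *)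

(* Defs.v *)
From Stdlib Require Import Reals.
From Stdlib Require Fin.
From Coquelicot Require Import Coquelicot.
Open Scope R_scope.

Definition Cn (n : nat) := Fin.t n -> C.

Definition vzero {n} : Cn n := fun _ => RtoC 0.
Definition vadd {n} (x y : Cn n) : Cn n := fun i => Cplus (x i) (y i).
Definition vsub {n} (x y : Cn n) : Cn n := fun i => Cminus (x i) (y i).
Definition vscal {n} (c : C) (x : Cn n) : Cn n := fun i => Cmult c (x i).

Record is_norm {n : nat} (N : Cn n -> R) : Prop := {
  norm_definite : forall x, N x = 0 -> forall i, x i = RtoC 0;
  norm_homog : forall (c : C) x, N (vscal c x) = Cmod c * N x;
  norm_triangle : forall x y, N (vadd x y) <= N x + N y }.

Definition C2r (h : R -> R) : Prop :=
  (forall t, ex_derive h t) /\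
  (forall t, ex_derive (Derive h) t) /\
  (forall t, continuous (Derive (Derive h)) t).

Definition cderiv (g : R -> C) (t : R) : C :=
  (Derive (fun s => Re (g s)) t, Derive (fun s => Im (g s)) t).

Definition C2vec {n} (xi : R -> Cn n) : Prop :=
  forall i, C2r (fun s => Re (xi s i)) /\ C2r (fun s => Im (xi s i)).

Definition vderiv {n} (xi : R -> Cn n) (t : R) : Cn n :=
  fun i => cderiv (fun s => xi s i) t.

Definition Lop {n} (a0 a1 a2 : R) (xi : R -> Cn n) (t : R) : Cn n :=
  fun i => Cplus (Cplus (Cmult (RtoC a0) (vderiv (vderiv xi) t i))
                        (Cmult (RtoC a1) (vderiv xi t i)))
                 (Cmult (RtoC a2) (xi t i)).

Definition is_Ulam_constant {n} (N : Cn n -> R) (a0 a1 a2 : R) (L : R) : Prop :=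
  0 < L /\
  forall eps : R, 0 < eps ->
  forall xi : R -> Cn n, C2vec xi ->
  (forall t, N (Lop a0 a1 a2 xi t) <= eps) ->
  exists x : R -> Cn n, C2vec x /\
    (forall t i, Lop a0 a1 a2 x t i = RtoC 0) /\
    (forall t, N (vsub (xi t) (x t)) <= L * eps).

Definition Ulam_stable {n} (N : Cn n -> R) (a0 a1 a2 : R) : Prop :=
  exists L, is_Ulam_constant N a0 a1 a2 L.

Definition is_min_Ulam_constant {n} (N : Cn n -> R) (a0 a1 a2 : R) (B : R) : Prop :=
  is_Ulam_constant N a0 a1 a2 B /\
  forall L, L < B -> ~ is_Ulam_constant N a0 a1 a2 L.

(* Main.v *)
Require Import Defs.
From Stdlib Require Import Reals Lra Psatz.
From Coquelicot Require Import Coquelicot.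
From Stdlib Require Import FunctionalExtensionality ClassicalEpsilon Classical.
Open Scope R_scope.

Definition comp {n} (v : Cn n) (i : Fin.t n) (b : bool) : R :=
  if b then fst (v i) else snd (v i).
Definition mkv {n} (f : Fin.t n -> bool -> R) : Cn n := fun i => (f i true, f i false).
Definition rsc {n} (a : R) (v : Cn n) : Cn n := vscal (RtoC a) v.

Lemma comp_mkv {n} f (i : Fin.t n) b : comp (mkv f) i b = f i b.
Proof. destruct b; reflexivity. Qed.
Lemma comp_vadd {n} (u v : Cn n) i b : comp (vadd u v) i b = comp u i b + comp v i b.
Proof. destruct b; reflexivity. Qed.
Lemma comp_vsub {n} (u v : Cn n) i b : comp (vsub u v) i b = comp u i b - comp v i b.
Proof. destruct b; reflexivity. Qed.
Lemma comp_rsc {n} a (v : Cn n) i b : comp (rsc a v) i b = a * comp v i b.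
Proof. destruct b; unfold comp, rsc, vscal, Cmult, RtoC; simpl; ring. Qed.
Lemma comp_vzero {n} (i : Fin.t n) b : comp vzero i b = 0.
Proof. destruct b; reflexivity. Qed.

Lemma vec_ext {n} (u v : Cn n) : (forall i b, comp u i b = comp v i b) -> u = v.
Proof.
  intros H; apply functional_extensionality; intro i.
  pose proof (H i true) as H1; pose proof (H i false) as H2; unfold comp in *.
  destruct (u i), (v i); simpl in *; subst; reflexivity.
Qed.

Lemma abs_comp_le_Cmod {n} (v : Cn n) i b : Rabs (comp v i b) <= Cmod (v i).
Proof.
  pose proof (Rmax_Cmod (v i)). destruct b; unfold comp.
  - eapply Rle_trans; [apply Rmax_l|exact H].
  - eapply Rle_trans; [apply Rmax_r|exact H].
Qed.

Lemma Cmod_le_sum (z : C) : Cmod z <= Rabs (fst z) + Rabs (snd z).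
Proof.
  pose proof (Cmod2_alt z) as H. unfold Re, Im in H.
  pose proof (Cmod_ge_0 z).
  pose proof (Rabs_pos (fst z)). pose proof (Rabs_pos (snd z)).
  rewrite <- (pow2_abs (fst z)), <- (pow2_abs (snd z)) in H.
  nra.
Qed.

Lemma Rabs_m1 : Rabs (-1) = 1.
Proof. rewrite Rabs_left; lra. Qed.

Section Norm.
Context {n : nat} (N : Cn n -> R) (HN : is_norm N).

Lemma N_zero : N vzero = 0.
Proof.
  replace (@vzero n) with (vscal (RtoC 0) (@vzero n)).
  - rewrite (norm_homog _ HN), Cmod_0; ring.
  - apply vec_ext; intros; change (comp (rsc 0 (@vzero n)) i b = comp vzero i b); rewrite comp_rsc, comp_vzero; ring.
Qed.

Lemma N_rsc a v : N (rsc a v) = Rabs a * N v.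
Proof. unfold rsc; rewrite (norm_homog _ HN), Cmod_R; reflexivity. Qed.

Lemma N_ge0 v : 0 <= N v.
Proof.
  pose proof (@Defs.norm_triangle _ N HN v (rsc (-1) v)) as H.
  replace (vadd v (rsc (-1) v)) with (@vzero n) in H.
  - rewrite N_zero, N_rsc in H. rewrite Rabs_m1 in H. lra.
  - apply vec_ext; intros; rewrite comp_vadd, comp_rsc, comp_vzero; ring.
Qed.

Lemma N_sym u v : N (vsub u v) = N (vsub v u).
Proof.
  replace (vsub u v) with (rsc (-1) (vsub v u)).
  - rewrite N_rsc, Rabs_m1; ring.
  - apply vec_ext; intros; rewrite comp_rsc, !comp_vsub; ring.
Qed.

Lemma N_tri3 u v w : N (vsub u w) <= N (vsub u v) + N (vsub v w).
Proof.
  replace (vsub u w) with (vadd (vsub u v) (vsub v w)).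
  - apply (@Defs.norm_triangle _ N HN).
  - apply vec_ext; intros; rewrite comp_vadd, !comp_vsub; ring.
Qed.

Lemma N_self u : N (vsub u u) = 0.
Proof.
  replace (vsub u u) with (@vzero n). apply N_zero.
  apply vec_ext; intros; rewrite comp_vsub, comp_vzero; ring.
Qed.

End Norm.

Lemma fin_nat {n} (P : Fin.t n -> bool -> nat -> Prop) :
  (forall i b k0 k1, (k0 <= k1)%nat -> P i b k0 -> P i b k1) ->
  (forall i b, exists k, P i b k) -> exists k, forall i b, P i b k.
Proof.
  induction n as [|m IH]; intros Hm Hex.
  - exists 0%nat. intros i; apply (Fin.case0 (fun i => forall b, P i b 0%nat) i).
  - destruct (IH (fun j b k => P (Fin.FS j) b k)) as [k1 Hk1].
    + intros; eapply Hm; eauto.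
    + intros; apply Hex.
    + destruct (Hex Fin.F1 true) as [kt Ht]; destruct (Hex Fin.F1 false) as [kf Hf].
      exists (Nat.max k1 (Nat.max kt kf)). intros i.
      pattern i; apply Fin.caseS'.
      * intros [|]; eapply Hm; [|eassumption| |eassumption]; lia.
      * intros j b. eapply Hm; [|apply Hk1]. lia.
Qed.

Lemma fin_real {n} (P : Fin.t n -> bool -> R -> Prop) :
  (forall i b x y, 0 < x -> x <= y -> P i b y -> P i b x) ->
  (forall i b, exists h, 0 < h /\ P i b h) -> exists h, 0 < h /\ forall i b, P i b h.
Proof.
  induction n as [|m IH]; intros Hm Hex.
  - exists 1. split; [lra|]. intros i; apply (Fin.case0 (fun i => forall b, P i b 1) i).
  - destruct (IH (fun j b k => P (Fin.FS j) b k)) as [k1 [Hp Hk1]].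
    + intros; eapply Hm; eauto.
    + intros; apply Hex.
    + destruct (Hex Fin.F1 true) as [kt [Htp Ht]]; destruct (Hex Fin.F1 false) as [kf [Hfp Hf]].
      exists (Rmin k1 (Rmin kt kf)). split.
      { repeat apply Rmin_pos; auto. }
      intros i. pattern i; apply Fin.caseS'.
      * intros [|].
        -- eapply Hm; [| |exact Ht]. repeat apply Rmin_pos; auto.
           eapply Rle_trans; [apply Rmin_r|apply Rmin_l].
        -- eapply Hm; [| |exact Hf]. repeat apply Rmin_pos; auto.
           eapply Rle_trans; [apply Rmin_r|apply Rmin_r].
      * intros j b. eapply Hm; [| |apply Hk1]. repeat apply Rmin_pos; auto. apply Rmin_l.
Qed.

Definition norm_equiv {n} (N : Cn n -> R) (c K : R) :=
  0 < c /\ 0 <= K /\ (forall v i b, Rabs (comp v i b) <= c * N v) /\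
  (forall v e, (forall i b, Rabs (comp v i b) <= e) -> N v <= K * e).

Lemma small_frac c eps : 0 <= c -> 0 < eps -> c * (eps / (c + 1)) <= eps.
Proof.
  intros. replace (c * (eps / (c + 1))) with (eps - eps / (c + 1)) by (field; lra).
  assert (0 < eps / (c+1)) by (apply Rdiv_lt_0_compat; lra). lra.
Qed.

Lemma LIMV {n} (N : Cn n -> R) (HN : is_norm N) c K (HE : norm_equiv N c K)
  (G : nat -> Cn n) (beta : nat -> R) :
  (forall k j, (k <= j)%nat -> N (vsub (G j) (G k)) <= beta k) -> Un_cv beta 0 ->
  exists L, forall eps, 0 < eps -> exists k0, forall k, (k0 <= k)%nat -> N (vsub (G k) L) <= eps.
Proof.
  intros HG Hb. destruct HE as [Hc [HK [Hh He]]].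
  assert (Hcau : forall i b, Cauchy_crit (fun k => comp (G k) i b)).
  { intros i b eps Heps. destruct (Hb (eps / (c+1))) as [N0 HN0].
    { apply Rdiv_lt_0_compat; lra. }
    exists N0. intros p q Hp Hq. unfold R_dist.
    assert (Hgen: forall p q, (p >= N0)%nat -> (p <= q)%nat ->
               Rabs (comp (G p) i b - comp (G q) i b) < eps).
    { intros p' q' Hp' Hpq. rewrite <- Rabs_Ropp.
      replace (- (comp (G p') i b - comp (G q') i b)) with (comp (vsub (G q') (G p')) i b)
        by (rewrite !comp_vsub; ring).
      eapply Rle_lt_trans; [apply Hh|]. specialize (HG p' q' Hpq). specialize (HN0 p' Hp').
      unfold R_dist in HN0. rewrite Rminus_0_r in HN0.
      apply Rle_lt_trans with (c * Rabs (beta p')).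
      { apply Rmult_le_compat_l; [lra|]. eapply Rle_trans; [exact HG| apply Rle_abs]. }
      apply Rlt_le_trans with (c * (eps/(c+1))). apply Rmult_lt_compat_l; lra.
      apply small_frac; lra. }
    destruct (Nat.le_ge_cases p q). apply Hgen; auto. rewrite Rabs_minus_sym; apply Hgen; auto. }
  pose (l := fun i b => proj1_sig (Rcomplete.R_complete _ (Hcau i b))).
  assert (Hl : forall i b, Un_cv (fun k => comp (G k) i b) (l i b)).
  { intros i b. exact (proj2_sig (Rcomplete.R_complete _ (Hcau i b))). }
  exists (mkv l). intros eps Heps.
  assert (HeK : 0 < eps / (K + 1)) by (apply Rdiv_lt_0_compat; lra).
  destruct (fin_nat (fun i b k0 => forall k, (k0 <= k)%nat ->
              Rabs (comp (G k) i b - l i b) <= eps/(K+1))) as [k0 Hk0].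
  - intros i b k0 k1 H01 H k Hk. apply H; lia.
  - intros i b. destruct (Hl i b (eps/(K+1)) HeK) as [k0 Hk]. exists k0.
    intros k Hk'. apply Rlt_le. apply Hk; lia.
  - exists k0. intros k Hk. eapply Rle_trans. apply He with (e := eps/(K+1)).
    + intros i b. rewrite comp_vsub, comp_mkv. apply Hk0; auto.
    + apply small_frac; lra.
Qed.

Lemma inv_cv (C0 : R) : Un_cv (fun k => C0 / (INR k + 1)) 0.
Proof.
  intros eps Heps. destruct (INR_archimed eps (Rabs C0) Heps) as [N0 HN0]. exists N0.
  intros k Hk. unfold R_dist. rewrite Rminus_0_r.
  assert (Hk1 : 0 < INR k + 1) by (pose proof (pos_INR k); lra).
  unfold Rdiv. rewrite Rabs_mult, Rabs_inv, (Rabs_right (INR k+1)) by lra.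
  apply Rmult_lt_reg_r with (INR k+1); auto. rewrite Rmult_assoc, Rinv_l by lra.
  apply le_INR in Hk. pose proof (Rabs_pos C0). nra.
Qed.

Definition cons0 {m} (u : Cn m) : Cn (S m) := fun i => Fin.caseS' i (fun _ => C) (RtoC 0) u.
Definition e1 {m} : Cn (S m) := fun i => Fin.caseS' i (fun _ => C) (RtoC 1) (fun _ => RtoC 0).
Definition vtail {m} (v : Cn (S m)) : Cn m := fun j => v (Fin.FS j).

Ltac vsimpl := unfold comp, vadd, vsub, vscal, rsc, cons0, e1, vtail, vzero, Cplus, Cminus, Copp, Cmult, RtoC; simpl.
Ltac fin_ext := apply vec_ext; let i := fresh "i" in intro i; pattern i; apply Fin.caseS';
   [intros [|] | let j := fresh "j" in intros j [|]]; vsimpl.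


Lemma NEQ : forall n (N : Cn n -> R), is_norm N -> exists c K, norm_equiv N c K.
Proof.
  induction n as [|m IH]; intros N HN.
  - exists 1, 0. repeat split; try lra.
    + intros v i; exfalso; inversion i.
    + intros v e _. replace v with (@vzero 0). rewrite (N_zero N HN). lra.
      apply vec_ext; intros i; exfalso; inversion i.
  - pose (N' := fun u : Cn m => N (cons0 u)).
    assert (HN' : is_norm N').
    { split.
      - intros x Hx i. exact (Defs.norm_definite _ HN _ Hx (Fin.FS i)).
      - intros c0 x. unfold N'. replace (cons0 (vscal c0 x)) with (vscal c0 (cons0 x)).
        apply (Defs.norm_homog _ HN). fin_ext; ring.
      - intros x y. unfold N'. replace (cons0 (vadd x y)) with (vadd (cons0 x) (cons0 y)).
        apply (Defs.norm_triangle _ HN). fin_ext; ring. }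
    destruct (IH N' HN') as [c' [K' [Hc' [HK' [Hh' He']]]]].
    assert (Hdec : forall v : Cn (S m), v = vadd (vscal (v Fin.F1) e1) (cons0 (vtail v))).
    { intros v. fin_ext; ring. }
    assert (HNe1 : 0 < N e1).
    { destruct (Rle_lt_or_eq_dec 0 (N e1) (N_ge0 N HN _)) as [H|H]; auto.
      pose proof (Defs.norm_definite _ HN _ (eq_sym H) Fin.F1) as H1.
      simpl in H1. unfold RtoC in H1. injection H1. lra. }
    assert (Hd : exists d, 0 < d /\ forall w, d <= N (vsub e1 (cons0 w))).
    { apply NNPP; intro Hn.
      assert (Hseq : forall k : nat, exists w, N (vsub e1 (cons0 w)) < / (INR k + 1)).
      { intro k. apply NNPP; intro H'. apply Hn. exists (/ (INR k + 1)). split.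
        - apply Rinv_0_lt_compat. pose proof (pos_INR k); lra.
        - intro w. apply Rnot_lt_le. intro Hl. apply H'. exists w; exact Hl. }
      pose (ws := fun k => proj1_sig (constructive_indefinite_description _ (Hseq k))).
      assert (Hws : forall k, N (vsub e1 (cons0 (ws k))) < / (INR k + 1)).
      { intro k. exact (proj2_sig (constructive_indefinite_description _ (Hseq k))). }
      destruct (LIMV N' HN' c' K' (conj Hc' (conj HK' (conj Hh' He'))) ws (fun k => 2 / (INR k + 1)))
        as [winf Hwinf].
      - intros k j Hkj. unfold N'.
        replace (cons0 (vsub (ws j) (ws k))) with (vsub (cons0 (ws j)) (cons0 (ws k)))
          by (fin_ext; ring).
        eapply Rle_trans; [apply (N_tri3 N HN) with (v := e1)|].
        rewrite (N_sym N HN (cons0 (ws j))).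
        pose proof (Hws k); pose proof (Hws j).
        apply le_INR in Hkj.
        assert (/ (INR j + 1) <= / (INR k + 1)).
        { apply Rinv_le_contravar; pose proof (pos_INR k); lra. }
        unfold Rdiv. lra.
      - apply inv_cv.
      - assert (Hz : N (vsub e1 (cons0 winf)) <= 0).
        { apply Rnot_lt_le; intro Hpos.
          assert (Hp2 : 0 < N (vsub e1 (cons0 winf)) / 2) by lra.
          destruct (Hwinf _ Hp2) as [k0 Hk0].
          destruct (inv_cv 1 (N (vsub e1 (cons0 winf)) / 2)) as [k1 Hk1].
          { lra. }
          pose (k := Nat.max k0 k1).
          specialize (Hk0 k (Nat.le_max_l _ _)). specialize (Hk1 k (Nat.le_max_r _ _)).
          specialize (Hws k). unfold R_dist in Hk1. rewrite Rminus_0_r in Hk1.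
          unfold Rdiv in Hk1. rewrite Rmult_1_l in Hk1.
          pose proof (Rle_abs (/ (INR k + 1))).
          pose proof (N_tri3 N HN e1 (cons0 (ws k)) (cons0 winf)).
          unfold N' in Hk0.
          replace (vsub (cons0 (ws k)) (cons0 winf)) with (cons0 (vsub (ws k) winf)) in H0
            by (fin_ext; ring).
          unfold Rdiv in *. lra. }
        pose proof (N_ge0 N HN (vsub e1 (cons0 winf))).
        assert (Hz0 : N (vsub e1 (cons0 winf)) = 0) by lra.
        pose proof (Defs.norm_definite _ HN _ Hz0 Fin.F1) as H1.
        vsimpl. simpl in H1. unfold Cminus, Cplus, Copp, RtoC in H1. simpl in H1.
        injection H1. lra. }
    destruct Hd as [d [Hdp Hd]].
    assert (HF1 : forall v : Cn (S m), Cmod (v Fin.F1) * d <= N v).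
    { intro v. destruct (classic (v Fin.F1 = RtoC 0)) as [H0|H0].
      - rewrite H0, Cmod_0. rewrite Rmult_0_l. apply (N_ge0 N HN).
      - remember (v Fin.F1) as z eqn:Ez.
        pose (w := fun j => Cmult (Cinv z) (Copp (v (Fin.FS j)))).
        assert (Hz : fst z ^ 2 + snd z ^ 2 <> 0).
        { intro Hc. apply H0. destruct z as [x y]. simpl in Hc.
          assert (x = 0) by nra. assert (y = 0) by nra. subst. reflexivity. }
        assert (Hv : vscal z (vsub e1 (cons0 w)) = v).
        { apply vec_ext; intro i; pattern i; apply Fin.caseS'.
          - intros b; destruct b; vsimpl; rewrite <- Ez; ring.
          - intros j b. unfold w. destruct z as [x y]. destruct (v (Fin.FS j)) as [p q] eqn:E.
            destruct b; vsimpl; unfold Cinv; rewrite E; simpl; simpl in Hz; field; contradict Hz; nra. }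
        rewrite <- Hv.
        rewrite (Defs.norm_homog _ HN). apply Rmult_le_compat_l. apply Cmod_ge_0. apply Hd. }
    exists (/ d + c' * (1 + N e1 / d)), (2 * N e1 + K'). repeat split.
    + assert (0 < / d) by (apply Rinv_0_lt_compat; lra).
      assert (0 <= c' * (1 + N e1 / d)).
      { apply Rmult_le_pos; [lra|]. assert (0 <= N e1 / d) by (apply Rdiv_le_0_compat; lra). lra. }
      lra.
    + lra.
    + intros v i. pattern i; apply Fin.caseS'.
      * intros b. eapply Rle_trans; [apply abs_comp_le_Cmod|].
        specialize (HF1 v). pose proof (N_ge0 N HN v).
        assert (Cmod (v Fin.F1) <= / d * N v).
        { apply Rmult_le_reg_r with d; auto. rewrite Rmult_comm with (r1 := /d), Rmult_assoc, Rinv_l by lra. lra. }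
        assert (0 <= c' * (1 + N e1 / d) * N v).
        { apply Rmult_le_pos; auto. apply Rmult_le_pos; [lra|].
          assert (0 <= N e1 / d) by (apply Rdiv_le_0_compat; lra). lra. }
        nra.
      * intros j b. change (comp v (Fin.FS j) b) with (comp (vtail v) j b).
        eapply Rle_trans; [apply Hh'|]. unfold N'.
        assert (Htail : cons0 (vtail v) = vsub v (vscal (v Fin.F1) e1)).
        { rewrite (Hdec v) at 2. fin_ext; ring. }
        rewrite Htail.
        assert (Hb : N (vsub v (vscal (v Fin.F1) e1)) <= N v * (1 + N e1 / d)).
        { replace (vsub v (vscal (v Fin.F1) e1)) with (vadd v (vscal (Copp (v Fin.F1)) e1)) by (fin_ext; ring).
          eapply Rle_trans; [apply (Defs.norm_triangle _ HN)|].
          rewrite (Defs.norm_homog _ HN).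
          assert (Cmod (Copp (v Fin.F1)) = Cmod (v Fin.F1)).
          { destruct (v Fin.F1) as [x y]; unfold Cmod, Copp; simpl. f_equal. ring. }
          rewrite H.
          specialize (HF1 v).
          assert (Cmod (v Fin.F1) * N e1 <= N v * (N e1 / d)).
          { unfold Rdiv. apply Rmult_le_reg_r with d; auto.
            replace (N v * (N e1 * / d) * d) with (N v * N e1) by (field; lra).
            nra. }
          lra. }
        assert (0 <= / d) by (apply Rlt_le, Rinv_0_lt_compat; lra).
        pose proof (N_ge0 N HN v).
        assert (0 <= N v * / d) by (apply Rmult_le_pos; lra).
        rewrite Rmult_plus_distr_r.
        assert (c' * N (vsub v (vscal (v Fin.F1) e1)) <= c' * (1 + N e1 / d) * N v).
        { rewrite Rmult_assoc. apply Rmult_le_compat_l; lra. }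
        nra.
    + intros v e He.
      assert (He0 : 0 <= e) by (specialize (He Fin.F1 true); pose proof (Rabs_pos (comp v Fin.F1 true)); lra).
      rewrite (Hdec v). eapply Rle_trans; [apply (Defs.norm_triangle _ HN)|].
      rewrite (Defs.norm_homog _ HN).
      assert (Cmod (v Fin.F1) <= 2 * e).
      { eapply Rle_trans; [apply Cmod_le_sum|].
        pose proof (He Fin.F1 true); pose proof (He Fin.F1 false). unfold comp in *. lra. }
      assert (N' (vtail v) <= K' * e).
      { apply He'. intros i b. apply (He (Fin.FS i) b). }
      unfold N' in H0. nra.
Qed.

Definition Dv {n} (F F' : R -> Cn n) (s : R) :=
  forall i b, is_derive (fun u => comp (F u) i b) s (comp (F' s) i b).

Lemma deriv_approx (f : R -> R) l s : is_derive f s l ->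
  forall eps, 0 < eps -> exists h, 0 < h /\ forall u, Rabs (u - s) < h ->
    Rabs (f u - f s - (u - s) * l) <= eps * Rabs (u - s).
Proof.
  intros Hd eps He. apply is_derive_Reals in Hd. destruct (Hd eps He) as [del Hdel].
  exists del. split. apply cond_pos. intros u Hu.
  destruct (Req_dec_T u s) as [->|Hne].
  - replace (f s - f s - (s - s) * l) with 0 by ring. rewrite Rabs_R0.
    apply Rmult_le_pos; [lra|apply Rabs_pos].
  - specialize (Hdel (u - s)). replace (s + (u - s)) with u in Hdel by ring.
    assert (Hh : u - s <> 0) by lra.
    specialize (Hdel Hh Hu).
    replace (f u - f s - (u - s) * l) with ((u - s) * ((f u - f s) / (u - s) - l)) by (field; auto).
    rewrite Rabs_mult, Rmult_comm. apply Rmult_le_compat_r. apply Rabs_pos. lra.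
Qed.

Lemma local_vec {n} (N : Cn n -> R) c K (HE : norm_equiv N c K) F F' s : Dv F F' s ->
  forall eps, 0 < eps -> exists h, 0 < h /\ forall u, Rabs (u - s) < h ->
    N (vsub (vsub (F u) (F s)) (rsc (u - s) (F' s))) <= eps * Rabs (u - s).
Proof.
  intros HD eps He. destruct HE as [Hc [HK [Hh He']]].
  assert (He2 : 0 < eps/(K+1)) by (apply Rdiv_lt_0_compat; lra).
  destruct (fin_real (fun i b h => forall u, Rabs (u - s) < h ->
     Rabs (comp (F u) i b - comp (F s) i b - (u - s) * comp (F' s) i b) <= eps/(K+1) * Rabs (u - s)))
    as [h [Hh0 Hhh]].
  - intros i b x y Hx Hxy HP u Hu. apply HP. lra.
  - intros i b. exact (deriv_approx _ _ _ (HD i b) _ He2).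
  - exists h. split; auto. intros u Hu. eapply Rle_trans.
    + apply He' with (e := eps/(K+1) * Rabs (u - s)). intros i b.
      rewrite !comp_vsub, comp_rsc. apply Hhh; auto.
    + rewrite <- Rmult_assoc. apply Rmult_le_compat_r. apply Rabs_pos. apply small_frac; lra.
Qed.

Lemma loc_mono (D : R -> R) a b : a <= b ->
  (forall s, a <= s <= b -> exists h, 0 < h /\ forall u, a <= u <= b -> Rabs (u - s) < h ->
      (s <= u -> D u <= D s) /\ (u <= s -> D s <= D u)) ->
  D b <= D a.
Proof.
  intros Hab Hloc.
  pose (E := fun x => a <= x <= b /\ forall u, a <= u <= x -> D u <= D a).
  assert (HEa : E a) by (split; [lra| intros u Hu; replace u with a by lra; lra]).
  assert (Hbd : bound E) by (exists b; intros x Hx; apply Hx).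
  destruct (completeness E Hbd (ex_intro _ a HEa)) as [sg [Hub Hlub]].
  assert (Hsa : a <= sg) by (apply Hub; auto).
  assert (Hsb : sg <= b) by (apply Hlub; intros x Hx; apply Hx).
  assert (C1 : forall u, a <= u < sg -> D u <= D a).
  { intros u Hu. apply Rnot_lt_le. intro Hc.
    assert (sg <= u).
    { apply Hlub. intros x Hx. destruct (Rle_or_lt x u); auto.
      exfalso. destruct Hx as [_ Hx]. specialize (Hx u). lra. }
    lra. }
  destruct (Hloc sg (conj Hsa Hsb)) as [h [Hh Hl]].
  assert (C2 : D sg <= D a).
  { destruct (Req_dec_T sg a) as [->|Hne]; [lra|].
    pose (u := Rmax a (sg - h/2)).
    assert (a <= u) by apply Rmax_l.
    assert (u < sg) by (unfold u; apply Rmax_lub_lt; lra).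
    assert (sg - h/2 <= u) by apply Rmax_r.
    destruct (Hl u) as [_ Hu2]; [lra| rewrite Rabs_left by lra; lra |].
    specialize (Hu2 ltac:(lra)). specialize (C1 u ltac:(lra)). lra. }
  assert (C3 : sg = b).
  { destruct (Req_dec_T sg b) as [|Hne]; auto. exfalso.
    pose (x := Rmin b (sg + h/2)).
    assert (x <= b) by apply Rmin_l. assert (x <= sg + h/2) by apply Rmin_r.
    assert (sg < x) by (unfold x; apply Rmin_glb_lt; lra).
    assert (E x).
    { split; [lra|]. intros u Hu. destruct (Rlt_or_le u sg).
      - apply C1; lra.
      - destruct (Hl u) as [Hu1 _]; [lra| rewrite Rabs_right by lra; lra|].
        specialize (Hu1 ltac:(lra)). lra. }
    match goal with HH : E x |- _ => specialize (Hub x HH) end. lra. }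
  subst sg. exact C2.
Qed.

Lemma abs_le_inv x y : Rabs x <= y -> -y <= x <= y.
Proof.
  intros H. pose proof (Rle_abs x). pose proof (Rle_abs (-x)). rewrite Rabs_Ropp in H1. lra.
Qed.

Lemma le_eps (x y c : R) : 0 <= c -> (forall d, 0 < d -> x <= y + d * c) -> x <= y.
Proof.
  intros Hc H. apply Rnot_lt_le; intro Hl.
  specialize (H ((x - y) / (2 * (c + 1)))).
  assert (0 < (x - y) / (2 * (c + 1))) by (apply Rdiv_lt_0_compat; lra).
  specialize (H H0).
  assert ((x - y) / (2 * (c + 1)) * c <= (x - y) / 2).
  { replace ((x - y) / 2) with ((x - y) / (2 * (c + 1)) * (c + 1)) by (field; lra).
    apply Rmult_le_compat_l; lra. }
  lra.
Qed.

Lemma MVI {n} (N : Cn n -> R) (HN : is_norm N) c K (HE : norm_equiv N c K)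
  (F F' : R -> Cn n) (phi phi' : R -> R) a b : a <= b ->
  (forall s, a <= s <= b -> Dv F F' s /\ is_derive phi s (phi' s) /\ N (F' s) <= phi' s) ->
  N (vsub (F b) (F a)) <= phi b - phi a.
Proof.
  intros Hab H.
  apply (le_eps _ _ (b - a)); [lra|]. intros del Hdel.
  pose (D := fun u => N (vsub (F u) (F a)) - (phi u - phi a) - del * (u - a)).
  assert (HD : D b <= D a).
  { apply loc_mono; auto. intros s Hs.
    destruct (H s Hs) as [HF [Hp HN']].
    assert (Hd2 : 0 < del / 2) by lra.
    destruct (local_vec N c K HE F F' s HF _ Hd2) as [h1 [Hh1 Hv]].
    destruct (deriv_approx phi (phi' s) s Hp _ Hd2) as [h2 [Hh2 Hph]].
    exists (Rmin h1 h2). split; [apply Rmin_pos; auto|]. intros u Hu Hus.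
    assert (Hu1 : Rabs (u - s) < h1) by (eapply Rlt_le_trans; [exact Hus|apply Rmin_l]).
    assert (Hu2 : Rabs (u - s) < h2) by (eapply Rlt_le_trans; [exact Hus|apply Rmin_r]).
    specialize (Hv u Hu1). specialize (Hph u Hu2).
    assert (Hfs : N (vsub (F u) (F s)) <= del / 2 * Rabs (u - s) + Rabs (u - s) * phi' s).
    { replace (vsub (F u) (F s)) with
        (vadd (vsub (vsub (F u) (F s)) (rsc (u - s) (F' s))) (rsc (u - s) (F' s)))
        by (apply vec_ext; intros; rewrite comp_vadd, !comp_vsub, comp_rsc; ring).
      eapply Rle_trans; [apply (Defs.norm_triangle _ HN)|]. rewrite (N_rsc N HN).
      pose proof (Rabs_pos (u - s)). nra. }
    pose proof (N_tri3 N HN (F u) (F s) (F a)).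
    pose proof (N_tri3 N HN (F s) (F u) (F a)).
    rewrite (N_sym N HN (F s) (F u)) in H1.
    unfold D. split; intro Hsu.
    - rewrite (Rabs_right (u - s)) in Hfs, Hph by lra.
      apply abs_le_inv in Hph. lra.
    - rewrite (Rabs_left1 (u - s)) in Hfs, Hph by lra.
      apply abs_le_inv in Hph. lra. }
  unfold D in HD. rewrite N_self in HD; auto. lra.
Qed.

Lemma exp_ge1 x : 1 + x <= exp x.
Proof.
  destruct (Req_dec_T x 0) as [->|H]. rewrite exp_0; lra. left; apply exp_ineq1; auto.
Qed.

Lemma exp_cv (lam C0 : R) : 0 < lam -> Un_cv (fun k => C0 * exp (- lam * INR k)) 0.
Proof.
  intros Hl eps Heps.
  destruct (INR_archimed (lam * eps) (Rabs C0)) as [k0 Hk0]. { apply Rmult_lt_0_compat; auto. }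
  exists k0. intros k Hk. unfold R_dist. rewrite Rminus_0_r, Rabs_mult.
  replace (- lam * INR k) with (- (lam * INR k)) by ring. rewrite exp_Ropp.
  rewrite (Rabs_right (/ _)) by (left; apply Rinv_0_lt_compat, exp_pos).
  pose proof (exp_pos (lam * INR k)) as Hep.
  apply Rmult_lt_reg_r with (exp (lam * INR k)); auto.
  rewrite Rmult_assoc, Rinv_l by lra. rewrite Rmult_1_r.
  pose proof (exp_ge1 (lam * INR k)). apply le_INR in Hk.
  assert (INR k0 * (lam * eps) <= INR k * (lam * eps)).
  { apply Rmult_le_compat_r; auto. left; apply Rmult_lt_0_compat; auto. }
  nra.
Qed.

Lemma exp_inv_l x : exp x * exp (- x) = 1.
Proof. rewrite <- exp_plus. replace (x + - x) with 0 by ring. apply exp_0. Qed.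

Lemma FO {n} (N : Cn n -> R) (HN : is_norm N) c K (HE : norm_equiv N c K) (lam M : R)
  (y y' : R -> Cn n) :
  lam <> 0 -> (forall t, Dv y y' t) -> (forall t, N (vsub (y' t) (rsc lam (y t))) <= M) ->
  exists K0, forall t, N (vsub (y t) (rsc (exp (lam * t)) K0)) <= M / Rabs lam.
Proof.
  intros Hl HD HM.
  assert (HM0 : 0 <= M)
    by (pose proof (HM 0); pose proof (N_ge0 N HN (vsub (y' 0) (rsc lam (y 0)))); lra).
  pose (F := fun s => rsc (exp (- lam * s)) (y s)).
  pose (F' := fun s => rsc (exp (- lam * s)) (vsub (y' s) (rsc lam (y s)))).
  assert (HDF : forall s, Dv F F' s).
  { intros s i b. unfold F, F'. rewrite comp_rsc, comp_vsub, comp_rsc.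
    apply is_derive_ext with (f := fun u => exp (-lam*u) * comp (y u) i b).
    { intro; rewrite comp_rsc; reflexivity. }
    replace (exp (-lam*s) * (comp (y' s) i b - lam * comp (y s) i b)) with
      ((-lam * exp(-lam*s)) * comp (y s) i b + exp(-lam*s) * comp (y' s) i b) by ring.
    assert (He : is_derive (fun u => exp(-lam*u)) s (-lam*exp(-lam*s))).
    { auto_derive; [auto| ring]. }
    apply (is_derive_mult (fun u => exp (-lam*u)) (fun u => comp (y u) i b)).
    exact He. apply HD. intros; apply Rmult_comm. }
  pose (phi := fun s => - M / lam * exp (- lam * s)).
  assert (MB : forall a b, a <= b -> N (vsub (F b) (F a)) <= phi b - phi a).
  { intros a b Hab. apply (MVI N HN c K HE F F' phi (fun s => M * exp (- lam * s))); auto.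
    intros s Hs. split; [apply HDF|]. split.
    - unfold phi. auto_derive; [auto| field; auto].
    - unfold F'. rewrite (N_rsc N HN), Rabs_right by (left; apply exp_pos).
      rewrite Rmult_comm. apply Rmult_le_compat_r; [left; apply exp_pos| apply HM]. }
  assert (Claim : exists L0, forall t, N (vsub (F t) L0) <= M / Rabs lam * exp (- lam * t)).
  { destruct (Rlt_or_le 0 lam) as [Hp|Hn].
    - destruct (LIMV N HN c K HE (fun k => F (INR k)) (fun k => M / lam * exp (- lam * INR k)))
        as [L0 HL0].
      + intros k j Hkj. eapply Rle_trans; [apply MB; apply le_INR; auto|]. unfold phi.
        pose proof (exp_pos (- lam * INR j)).
        assert (0 <= M / lam) by (apply Rdiv_le_0_compat; lra). unfold Rdiv in *. nra.
      + apply exp_cv; auto.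
      + exists L0. intro t. rewrite Rabs_right by lra. apply (le_eps _ _ 1); [lra|].
        intros d Hd. destruct (HL0 d Hd) as [k0 Hk0].
        destruct (INR_archimed 1 t) as [k1 Hk1]; [lra|].
        pose (k := Nat.max k0 k1).
        specialize (Hk0 k (Nat.le_max_l _ _)).
        assert (Hkt : t <= INR k).
        { pose proof (le_INR _ _ (Nat.le_max_r k0 k1)). fold k in H. lra. }
        pose proof (N_tri3 N HN (F t) (F (INR k)) L0).
        rewrite (N_sym N HN (F t) (F (INR k))) in H. cbv beta in Hk0.
        pose proof (MB _ _ Hkt). unfold phi in H0.
        pose proof (exp_pos (- lam * INR k)).
        assert (0 <= M / lam) by (apply Rdiv_le_0_compat; lra). unfold Rdiv in *. nra.
    - assert (Hn' : lam < 0) by lra. clear Hn.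
      destruct (LIMV N HN c K HE (fun k => F (- INR k)) (fun k => M / (- lam) * exp (- - lam * INR k)))
        as [L0 HL0].
      + intros k j Hkj. rewrite (N_sym N HN).
        eapply Rle_trans; [apply MB; apply Ropp_le_contravar, le_INR; auto|]. unfold phi.
        replace (- lam * - INR j) with (- - lam * INR j) by ring.
        replace (- lam * - INR k) with (- - lam * INR k) by ring.
        pose proof (exp_pos (- - lam * INR j)).
        assert (0 <= M / - lam) by (apply Rdiv_le_0_compat; lra).
        replace (- M / lam) with (M / - lam) by (field; lra). unfold Rdiv in *. nra.
      + apply exp_cv; lra.
      + exists L0. intro t. rewrite Rabs_left by lra. apply (le_eps _ _ 1); [lra|].
        intros d Hd. destruct (HL0 d Hd) as [k0 Hk0].
        destruct (INR_archimed 1 (- t)) as [k1 Hk1]; [lra|].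
        pose (k := Nat.max k0 k1).
        specialize (Hk0 k (Nat.le_max_l _ _)).
        assert (Hkt : - INR k <= t).
        { pose proof (le_INR _ _ (Nat.le_max_r k0 k1)). fold k in H. lra. }
        pose proof (N_tri3 N HN (F t) (F (- INR k)) L0). cbv beta in Hk0.
        pose proof (MB _ _ Hkt). unfold phi in H0.
        pose proof (exp_pos (- lam * - INR k)).
        assert (0 <= M / - lam) by (apply Rdiv_le_0_compat; lra).
        replace (- M / lam) with (M / - lam) in H0 by (field; lra). unfold Rdiv in *. nra. }
  destruct Claim as [L0 HL0]. exists L0. intro t.
  replace (vsub (y t) (rsc (exp (lam * t)) L0)) with (rsc (exp (lam * t)) (vsub (F t) L0)).
  - rewrite (N_rsc N HN), Rabs_right by (left; apply exp_pos).
    specialize (HL0 t). pose proof (exp_pos (lam * t)).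
    replace (M / Rabs lam) with (exp (lam * t) * (M / Rabs lam * exp (- lam * t))).
    + apply Rmult_le_compat_l; lra.
    + replace (- lam * t) with (- (lam * t)) by ring.
      rewrite Rmult_comm, Rmult_assoc, (Rmult_comm (exp _)), exp_inv_l. ring.
  - apply vec_ext; intros i b. unfold F. rewrite comp_rsc, !comp_vsub, !comp_rsc.
    rewrite Rmult_minus_distr_l, <- Rmult_assoc.
    replace (- lam * t) with (- (lam * t)) by ring. rewrite exp_inv_l. ring.
Qed.

Definition pp (l1 l2 t : R) : R :=
  if Req_dec_T l1 l2 then t * exp (l1 * t) else (exp (l1 * t) - exp (l2 * t)) / (l1 - l2).

Lemma pp_deriv l1 l2 t : is_derive (pp l1 l2) t (l2 * pp l1 l2 t + exp (l1 * t)).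
Proof.
  unfold pp. destruct (Req_dec_T l1 l2) as [<-|Hne].
  - auto_derive; auto; ring.
  - auto_derive; auto. field. lra.
Qed.

Lemma pp0 l1 l2 : pp l1 l2 0 = 0.
Proof. unfold pp; destruct (Req_dec_T l1 l2); rewrite !Rmult_0_r, exp_0; field; lra. Qed.

Lemma isd_lin (f g : R -> R) (a b df dg x : R) : is_derive f x df -> is_derive g x dg ->
  is_derive (fun u => a * f u + b * g u) x (a * df + b * dg).
Proof.
  intros Hf Hg.
  apply (is_derive_plus (fun u => a * f u) (fun u => b * g u));
  [apply (is_derive_scal f x a) | apply (is_derive_scal g x b)]; assumption.
Qed.

Lemma isd_exp k t : is_derive (fun s => exp (k * s)) t (k * exp (k * t)).
Proof. auto_derive; auto; ring. Qed.

Lemma GD l1 l2 A B C t :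
  is_derive (fun s => A * pp l1 l2 s + B * exp (l1 * s) + C * exp (l2 * s)) t
    ((l2 * A) * pp l1 l2 t + (A + l1 * B) * exp (l1 * t) + (l2 * C) * exp (l2 * t)).
Proof.
  pose proof (isd_lin _ _ A B _ _ t (pp_deriv l1 l2 t) (isd_exp l1 t)) as H1.
  pose proof (isd_lin _ _ 1 C _ _ t H1 (isd_exp l2 t)) as H3.
  replace ((l2 * A) * pp l1 l2 t + (A + l1 * B) * exp (l1 * t) + (l2 * C) * exp (l2 * t))
    with (1 * (A * (l2 * pp l1 l2 t + exp (l1 * t)) + B * (l1 * exp (l1 * t))) +
     C * (l2 * exp (l2 * t))) by ring.
  eapply is_derive_ext; [|exact H3]. intros; simpl; ring.
Qed.

Lemma DGD l1 l2 A B C :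
  Derive (fun s => A * pp l1 l2 s + B * exp (l1 * s) + C * exp (l2 * s)) =
  (fun t => (l2 * A) * pp l1 l2 t + (A + l1 * B) * exp (l1 * t) + (l2 * C) * exp (l2 * t)).
Proof. apply functional_extensionality; intro t. apply is_derive_unique, GD. Qed.

Lemma C2_form l1 l2 A B C : C2r (fun s => A * pp l1 l2 s + B * exp (l1 * s) + C * exp (l2 * s)).
Proof.
  split; [|split].
  - intro t. eexists; apply GD.
  - intro t. rewrite DGD. eexists; apply GD.
  - intro t. rewrite !DGD. apply (ex_derive_continuous (K:=R_AbsRing) (V:=R_NormedModule)). eexists; apply GD.
Qed.

Lemma zero_deriv_const (g : R -> R) : (forall u, is_derive g u 0) -> forall t, g t = g 0.
Proof.
  intros H t. destruct (Rtotal_order t 0) as [Hlt|[->|Hgt]]; auto.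
  - destruct (MVT_cor2 g (fun _ => 0) t 0 Hlt) as [c0 [Hc _]].
    { intros; apply is_derive_Reals, H. }
    lra.
  - destruct (MVT_cor2 g (fun _ => 0) 0 t Hgt) as [c0 [Hc _]].
    { intros; apply is_derive_Reals, H. }
    lra.
Qed.

Lemma exp_sol (w : R -> R) lam : (forall t, is_derive w t (lam * w t)) ->
  forall t, w t = exp (lam * t) * w 0.
Proof.
  intros Hw t.
  assert (Hg : forall u, is_derive (fun s => exp (- lam * s) * w s) u 0).
  { intro u. pose proof (is_derive_mult (fun s => exp (- lam * s)) w u _ _ (isd_exp (-lam) u) (Hw u)) as H.
    replace 0 with (plus (mult (- lam * exp (- lam * u)) (w u)) (mult (exp (- lam * u)) (lam * w u))).
    apply H. intros; apply Rmult_comm.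
    simpl. unfold plus, mult; simpl. ring. }
  pose proof (zero_deriv_const _ Hg t) as H. simpl in H.
  rewrite Rmult_0_r, exp_0, Rmult_1_l in H.
  rewrite <- H. rewrite <- Rmult_assoc.
  replace (- lam * t) with (- (lam * t)) by ring. rewrite exp_inv_l. ring.
Qed.

Lemma SOL2 l1 l2 (r r1 r2 : R -> R) : (forall t, is_derive r t (r1 t)) ->
  (forall t, is_derive r1 t (r2 t)) ->
  (forall t, r2 t - (l1 + l2) * r1 t + l1 * l2 * r t = 0) ->
  forall t, r t = pp l1 l2 t * (r1 0 - l2 * r 0) + exp (l2 * t) * r 0.
Proof.
  intros H1 H2 H3.
  pose (w := fun t => r1 t - l2 * r t).
  assert (Hw : forall t, is_derive w t (l1 * w t)).
  { intro t. pose proof (isd_lin _ _ 1 (-l2) _ _ t (H2 t) (H1 t)) as H.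
    replace (l1 * w t) with (1 * r2 t + - l2 * r1 t) by (unfold w; specialize (H3 t); nra).
    eapply is_derive_ext; [|exact H]. intros; unfold w; simpl; ring. }
  pose (W := w 0).
  pose (z := fun t => r t - pp l1 l2 t * W).
  assert (Hz : forall t, is_derive z t (l2 * z t)).
  { intro t. pose proof (isd_lin _ _ 1 (-W) _ _ t (H1 t) (pp_deriv l1 l2 t)) as H.
    replace (l2 * z t) with (1 * r1 t + - W * (l2 * pp l1 l2 t + exp (l1 * t))).
    - eapply is_derive_ext; [|exact H]. intros; unfold z; simpl; ring.
    - pose proof (exp_sol w l1 Hw t) as E.
      assert (E' : r1 t - l2 * r t = exp (l1*t) * W) by exact E.
      unfold z. lra. }
  intro t. pose proof (exp_sol z l2 Hz t) as E. unfold z in E. rewrite pp0 in E.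
  assert (HW : W = r1 0 - l2 * r 0) by reflexivity. rewrite <- HW. lra.
Qed.


Lemma comp_vderiv {n} (xi : R -> Cn n) t i b :
  comp (vderiv xi t) i b = Derive (fun s => comp (xi s) i b) t.
Proof. destruct b; unfold vderiv, cderiv, comp, Re, Im; cbn beta iota; apply eq_refl. Qed.

Lemma comp_vderiv2 {n} (xi : R -> Cn n) t i b :
  comp (vderiv (vderiv xi) t) i b = Derive (Derive (fun s => comp (xi s) i b)) t.
Proof. rewrite comp_vderiv. apply Derive_ext. intro; apply comp_vderiv. Qed.

Lemma comp_Lop {n} a0 a1 a2 (xi : R -> Cn n) t i b :
  comp (Lop a0 a1 a2 xi t) i b = a0 * comp (vderiv (vderiv xi) t) i b
     + a1 * comp (vderiv xi t) i b + a2 * comp (xi t) i b.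
Proof. destruct b; unfold Lop, comp, Cplus, Cmult, RtoC; cbn [fst snd]; ring. Qed.

Lemma C2vec_comp {n} (xi : R -> Cn n) : C2vec xi -> forall i b, C2r (fun s => comp (xi s) i b).
Proof. intros H i [|]; [exact (proj1 (H i)) | exact (proj2 (H i))]. Qed.

Lemma comp_C2vec {n} (xi : R -> Cn n) : (forall i b, C2r (fun s => comp (xi s) i b)) -> C2vec xi.
Proof. intros H i; split; [exact (H i true)| exact (H i false)]. Qed.

Lemma C_eq_comp {n} (v : Cn n) i : comp v i true = 0 -> comp v i false = 0 -> v i = RtoC 0.
Proof. unfold comp; intros; destruct (v i); cbn [fst snd] in *; subst; reflexivity. Qed.

Lemma is_derive_extR (f g : R -> R) x l : (forall t, f t = g t) -> is_derive f x l -> is_derive g x l.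
Proof. apply is_derive_ext. Qed.

Lemma EX {n} (N : Cn n -> R) (HN : is_norm N) c K (HE : norm_equiv N c K)
  a0 a1 a2 l1 l2 : a0 <> 0 -> a1 = - a0 * (l1 + l2) -> a2 = a0 * l1 * l2 -> l1 <> 0 -> l2 <> 0 ->
  forall eps, 0 < eps -> forall xi, C2vec xi -> (forall t, N (Lop a0 a1 a2 xi t) <= eps) ->
  exists x, C2vec x /\ (forall t i, Lop a0 a1 a2 x t i = RtoC 0) /\
    (forall t, N (vsub (xi t) (x t)) <= 1 / Rabs (a0 * l1 * l2) * eps).
Proof.
  intros Ha0 Ha1 Ha2 Hl1 Hl2 eps Heps xi Hxi Hb.
  pose proof (C2vec_comp xi Hxi) as Hc.
  pose (y1 := fun t => vsub (vderiv xi t) (rsc l2 (xi t))).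
  pose (y1' := fun t => vsub (vderiv (vderiv xi) t) (rsc l2 (vderiv xi t))).
  assert (HD1 : forall t, Dv y1 y1' t).
  { intros t i b. unfold y1'. rewrite comp_vsub, comp_rsc, comp_vderiv2, comp_vderiv.
    destruct (Hc i b) as [Hd1 [Hd2 _]].
    pose proof (isd_lin _ _ 1 (-l2) _ _ t (Derive_correct _ _ (Hd2 t)) (Derive_correct _ _ (Hd1 t))) as H.
    replace (Derive (Derive (fun s => comp (xi s) i b)) t - l2 * Derive (fun s => comp (xi s) i b) t)
      with (1 * Derive (Derive (fun s => comp (xi s) i b)) t + - l2 * Derive (fun s => comp (xi s) i b) t)
      by ring.
    eapply is_derive_extR; [|exact H]. intros u; cbv beta. unfold y1.
    rewrite comp_vsub, comp_rsc, comp_vderiv. ring. }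
  assert (HB1 : forall t, N (vsub (y1' t) (rsc l1 (y1 t))) <= / Rabs a0 * eps).
  { intro t. replace (vsub (y1' t) (rsc l1 (y1 t))) with (rsc (/ a0) (Lop a0 a1 a2 xi t)).
    - rewrite (N_rsc N HN), Rabs_inv. apply Rmult_le_compat_l; [|apply Hb].
      left; apply Rinv_0_lt_compat, Rabs_pos_lt; auto.
    - apply vec_ext; intros i b. unfold y1, y1'.
      rewrite comp_rsc, comp_Lop, !comp_vsub, !comp_rsc, !comp_vsub, !comp_rsc.
      subst a1 a2. field; auto. }
  destruct (FO N HN c K HE l1 _ y1 y1' Hl1 HD1 HB1) as [K1 HK1].
  pose (y2 := fun t => vsub (xi t) (rsc (pp l1 l2 t) K1)).
  pose (y2' := fun t => vsub (vderiv xi t) (rsc (l2 * pp l1 l2 t + exp (l1 * t)) K1)).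
  assert (HD2 : forall t, Dv y2 y2' t).
  { intros t i b. unfold y2'. rewrite comp_vsub, comp_rsc, comp_vderiv.
    destruct (Hc i b) as [Hd1 _].
    pose proof (isd_lin _ _ 1 (- comp K1 i b) _ _ t (Derive_correct _ _ (Hd1 t)) (pp_deriv l1 l2 t)) as H.
    replace (Derive (fun s => comp (xi s) i b) t - (l2 * pp l1 l2 t + exp (l1 * t)) * comp K1 i b)
      with (1 * Derive (fun s => comp (xi s) i b) t + - comp K1 i b * (l2 * pp l1 l2 t + exp (l1 * t)))
      by ring.
    eapply is_derive_extR; [|exact H]. intros u; cbv beta. unfold y2.
    rewrite comp_vsub, comp_rsc. ring. }
  assert (HB2 : forall t, N (vsub (y2' t) (rsc l2 (y2 t))) <= / Rabs a0 * eps / Rabs l1).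
  { intro t. replace (vsub (y2' t) (rsc l2 (y2 t))) with (vsub (y1 t) (rsc (exp (l1 * t)) K1)).
    - apply HK1.
    - apply vec_ext; intros i b. unfold y1, y2, y2'.
      rewrite !comp_vsub, !comp_rsc, !comp_vsub, !comp_rsc. ring. }
  destruct (FO N HN c K HE l2 _ y2 y2' Hl2 HD2 HB2) as [K2 HK2].
  pose (x := fun t => vadd (rsc (pp l1 l2 t) K1) (rsc (exp (l2 * t)) K2)).
  assert (Hxc : forall i b, (fun s => comp (x s) i b) =
     (fun s => comp K1 i b * pp l1 l2 s + 0 * exp (l1 * s) + comp K2 i b * exp (l2 * s))).
  { intros i b. apply functional_extensionality; intro s. unfold x.
    rewrite comp_vadd, !comp_rsc. ring. }
  exists x. split; [|split].
  - apply comp_C2vec. intros i b. rewrite Hxc. apply C2_form.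
  - intros t i.
    assert (Hz : forall b, comp (Lop a0 a1 a2 x t) i b = 0).
    { intro b. rewrite comp_Lop, comp_vderiv2, comp_vderiv, Hxc, !DGD.
      assert (comp (x t) i b = comp K1 i b * pp l1 l2 t + 0 * exp (l1 * t) + comp K2 i b * exp (l2 * t))
        by (change (comp (x t) i b) with ((fun s => comp (x s) i b) t); rewrite Hxc; reflexivity).
      rewrite H. subst a1 a2. ring. }
    apply C_eq_comp; apply Hz.
  - intro t. replace (vsub (xi t) (x t)) with (vsub (y2 t) (rsc (exp (l2 * t)) K2)).
    + eapply Rle_trans; [apply HK2|]. rewrite !Rabs_mult.
      pose proof (Rabs_pos_lt _ Ha0). pose proof (Rabs_pos_lt _ Hl1). pose proof (Rabs_pos_lt _ Hl2).
      right. field. lra.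
    + apply vec_ext; intros i b. unfold y2, x.
      rewrite !comp_vsub, comp_vadd, !comp_rsc. ring.
Qed.

Lemma exp_le_mono x y : x <= y -> exp x <= exp y.
Proof. intros [H|H]; [left; apply exp_increasing; auto| subst; lra]. Qed.

Lemma decay X Y C0 C1 m : 0 < m -> 0 <= C0 -> 0 <= C1 ->
  (forall t, 0 <= t -> X <= Y + exp (- m * t) * (C0 + C1 * t)) -> X <= Y.
Proof.
  intros Hm H0 H1 H. apply Rnot_lt_le; intro Hlt.
  set (d := X - Y). assert (Hd : 0 < d) by (unfold d; lra).
  set (t := 1 + 4 * (C0 + C1) / (d * m ^ 2)).
  assert (Hq : 0 <= 4 * (C0 + C1) / (d * m ^ 2)).
  { apply Rdiv_le_0_compat; [lra|]. apply Rmult_lt_0_compat; auto. apply pow_lt; auto. }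
  assert (Ht : 1 <= t) by (unfold t; lra).
  specialize (H t ltac:(lra)).
  assert (He : exp (m * t) = exp (m * t / 2) * exp (m * t / 2)).
  { rewrite <- exp_plus. f_equal. field. }
  pose proof (exp_ge1 (m * t / 2)).
  assert (Hmt : 0 <= m * t / 2) by (apply Rmult_le_pos; [apply Rmult_le_pos|]; lra).
  assert (Hexp : m ^ 2 * t ^ 2 / 4 <= exp (m * t)).
  { rewrite He. replace (m ^ 2 * t ^ 2 / 4) with ((m * t / 2) * (m * t / 2)) by field. nra. }
  assert (Hkey : d * m ^ 2 * t / 4 >= C0 + C1 + d * m ^ 2 / 4).
  { unfold t. assert (0 < d * m ^ 2) by (apply Rmult_lt_0_compat; auto; apply pow_lt; auto).
    replace (d * m ^ 2 * (1 + 4 * (C0 + C1) / (d * m ^ 2)) / 4) with (d * m ^ 2 / 4 + (C0 + C1)) by (field; lra).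
    lra. }
  assert (Hlt2 : C0 + C1 * t < d * exp (m * t)).
  { assert (0 < d * m ^ 2) by (apply Rmult_lt_0_compat; auto; apply pow_lt; auto).
    assert (d * (m ^ 2 * t ^ 2 / 4) <= d * exp (m * t)) by (apply Rmult_le_compat_l; lra).
    assert (d * (m ^ 2 * t ^ 2 / 4) = t * (d * m ^ 2 * t / 4)) by (simpl; field).
    assert (C0 + C1 * t <= t * (C0 + C1)) by nra.
    assert (t * (C0 + C1) < t * (d * m ^ 2 * t / 4)) by (apply Rmult_lt_compat_l; lra).
    lra. }
  pose proof (exp_pos (- m * t)).
  assert (Hinv : exp (- m * t) * exp (m * t) = 1).
  { rewrite <- exp_plus. replace (- m * t + m * t) with 0 by ring. apply exp_0. }
  assert (exp (- m * t) * (C0 + C1 * t) < exp (- m * t) * (d * exp (m * t)))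
    by (apply Rmult_lt_compat_l; auto).
  assert (exp (- m * t) * (d * exp (m * t)) = d).
  { replace (exp (- m * t) * (d * exp (m * t))) with (d * (exp (- m * t) * exp (m * t))) by ring.
    rewrite Hinv; ring. }
  unfold d in *. lra.
Qed.

Lemma pp_bound l1 l2 : exists C0, 0 <= C0 /\
  forall t, Rabs (pp l1 l2 t) <= (exp (l1 * t) + exp (l2 * t)) * (C0 + Rabs t).
Proof.
  unfold pp. destruct (Req_dec_T l1 l2) as [<-|Hne].
  - exists 0. split; [lra|]. intro t. rewrite Rabs_mult, (Rabs_right (exp _)) by (left; apply exp_pos).
    pose proof (exp_pos (l1 * t)). pose proof (Rabs_pos t). nra.
  - exists (/ Rabs (l1 - l2)). assert (Hp : 0 < Rabs (l1 - l2)) by (apply Rabs_pos_lt; lra).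
    split; [left; apply Rinv_0_lt_compat; auto|]. intro t.
    unfold Rdiv. rewrite Rabs_mult, Rabs_inv.
    pose proof (exp_pos (l1 * t)). pose proof (exp_pos (l2 * t)). pose proof (Rabs_pos t).
    assert (Rabs (exp (l1 * t) - exp (l2 * t)) <= exp (l1 * t) + exp (l2 * t)).
    { apply Rabs_le; lra. }
    assert (0 < / Rabs (l1 - l2)) by (apply Rinv_0_lt_compat; auto).
    nra.
Qed.

Lemma lin_zero a R0 : 0 <= a -> (forall t, 0 <= t -> t * a <= R0) -> a = 0.
Proof.
  intros Ha H. destruct Ha as [Ha|]; auto. exfalso.
  specialize (H ((Rabs R0 + 1) / a)).
  assert (0 <= (Rabs R0 + 1) / a) by (apply Rdiv_le_0_compat; [pose proof (Rabs_pos R0)|]; lra).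
  specialize (H H0). replace ((Rabs R0 + 1) / a * a) with (Rabs R0 + 1) in H by (field; lra).
  pose proof (Rle_abs R0). lra.
Qed.

Lemma LB_core {n} (N : Cn n -> R) (HN : is_norm N) (cv Wv Bv : Cn n) (L l1 l2 : R) :
  l1 <> 0 -> l2 <> 0 -> ~ (l1 < 0 < l2) ->
  (forall t, N (vsub cv (vadd (rsc (pp l1 l2 t) Wv) (rsc (exp (l2 * t)) Bv))) <= L) ->
  N cv <= L.
Proof.
  intros Hl1 Hl2 Hnot H.
  pose (v := fun t => vadd (rsc (pp l1 l2 t) Wv) (rsc (exp (l2 * t)) Bv)).
  assert (H' : forall t, N (vsub cv (v t)) <= L) by exact H. clear H. rename H' into H.
  assert (Hvdef : forall t, v t = vadd (rsc (pp l1 l2 t) Wv) (rsc (exp (l2 * t)) Bv)) by reflexivity.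
  clearbody v.
  pose proof (N_ge0 N HN Wv) as HW0. pose proof (N_ge0 N HN Bv) as HB0.
  pose proof (N_ge0 N HN cv) as Hc0.
  assert (Hv : forall t, N (v t) <= Rabs (pp l1 l2 t) * N Wv + exp (l2 * t) * N Bv).
  { intro t. rewrite Hvdef. eapply Rle_trans; [apply (Defs.norm_triangle _ HN)|].
    rewrite !(N_rsc N HN), (Rabs_right (exp _)) by (left; apply exp_pos). lra. }
  assert (T1 : forall t, N cv <= L + Rabs (pp l1 l2 t) * N Wv + exp (l2 * t) * N Bv).
  { intro t. replace cv with (vadd (vsub cv (v t)) (v t)) at 1
      by (apply vec_ext; intros; rewrite comp_vadd, comp_vsub; ring).
    eapply Rle_trans; [apply (Defs.norm_triangle _ HN)|]. specialize (H t). specialize (Hv t). lra. }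
  assert (T2 : forall t, Rabs (pp l1 l2 t) * N Wv <= L + N cv + exp (l2 * t) * N Bv).
  { intro t. rewrite <- (N_rsc N HN).
    replace (rsc (pp l1 l2 t) Wv) with (vadd (vsub (v t) cv) (vadd cv (rsc (- exp (l2 * t)) Bv)))
      by (apply vec_ext; intros; rewrite Hvdef, !comp_vadd, comp_vsub, !comp_rsc, comp_vadd, !comp_rsc; ring).
    eapply Rle_trans; [apply (Defs.norm_triangle _ HN)|].
    rewrite (N_sym N HN). specialize (H t).
    pose proof (Defs.norm_triangle _ HN cv (rsc (- exp (l2 * t)) Bv)).
    rewrite (N_rsc N HN), Rabs_Ropp, (Rabs_right (exp _)) in H0 by (left; apply exp_pos). lra. }
  destruct (pp_bound l1 l2) as [C0 [HC0 Hpb]].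
  destruct (Rlt_or_le l1 0) as [Ha|Ha]; destruct (Rlt_or_le l2 0) as [Hb|Hb].
  -
    set (m := Rmin (- l1) (- l2)). assert (Hm : 0 < m) by (apply Rmin_pos; lra).
    apply (decay _ _ (2 * C0 * N Wv + N Bv) (2 * N Wv) m Hm); try nra.
    intros t Ht. specialize (T1 t). specialize (Hpb t). rewrite (Rabs_right t) in Hpb by lra.
    assert (E1 : exp (l1 * t) <= exp (- m * t)).
    { apply exp_le_mono. assert (m <= - l1) by apply Rmin_l. nra. }
    assert (E2 : exp (l2 * t) <= exp (- m * t)).
    { apply exp_le_mono. assert (m <= - l2) by apply Rmin_r. nra. }
    pose proof (exp_pos (l1 * t)). pose proof (exp_pos (l2 * t)).
    assert (Rabs (pp l1 l2 t) * N Wv <= 2 * exp (- m * t) * (C0 + t) * N Wv).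
    { apply Rmult_le_compat_r; auto. eapply Rle_trans; [exact Hpb|].
      apply Rmult_le_compat_r; lra. }
    assert (exp (l2 * t) * N Bv <= exp (- m * t) * N Bv) by (apply Rmult_le_compat_r; auto).
    nra.
  - exfalso. apply Hnot. split; auto. destruct Hb; auto. exfalso; auto.
  -
    assert (Ha' : 0 < l1) by (destruct Ha; auto; exfalso; auto).
    assert (HW : l1 * N Wv / (l1 - l2) = 0).
    { apply (lin_zero _ (L + N cv + N Bv)).
      { apply Rdiv_le_0_compat; [apply Rmult_le_pos|]; lra. }
      intros t Ht. specialize (T2 t).
      assert (Hp : l1 * t / (l1 - l2) <= Rabs (pp l1 l2 t)).
      { unfold pp. destruct (Req_dec_T l1 l2) as [|Hne]; [lra|].
        eapply Rle_trans; [|apply Rle_abs]. unfold Rdiv.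
        apply Rmult_le_compat_r; [left; apply Rinv_0_lt_compat; lra|].
        pose proof (exp_ge1 (l1 * t)).
        assert (exp (l2 * t) <= 1) by (rewrite <- exp_0; apply exp_le_mono; nra). lra. }
      assert (exp (l2 * t) <= 1) by (rewrite <- exp_0; apply exp_le_mono; nra).
      assert (exp (l2 * t) * N Bv <= N Bv) by nra.
      assert (l1 * t / (l1 - l2) * N Wv <= Rabs (pp l1 l2 t) * N Wv) by (apply Rmult_le_compat_r; auto).
      replace (t * (l1 * N Wv / (l1 - l2))) with (l1 * t / (l1 - l2) * N Wv) by (field; lra).
      lra. }
    assert (HW0' : N Wv = 0).
    { unfold Rdiv in HW. apply Rmult_integral in HW. destruct HW as [HW|HW].
      - apply Rmult_integral in HW; destruct HW; [lra|auto].
      - exfalso. assert (0 < / (l1 - l2)) by (apply Rinv_0_lt_compat; lra). lra. }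
    apply (decay _ _ (N Bv) 0 (- l2)); try lra.
    intros t Ht. specialize (T1 t). rewrite HW0', Rmult_0_r in T1.
    replace (- - l2 * t) with (l2 * t) by ring. lra.
  -
    assert (Ha' : 0 < l1) by (destruct Ha; auto; exfalso; auto).
    assert (Hb' : 0 < l2) by (destruct Hb; auto; exfalso; auto).
    set (m := Rmin l1 l2). assert (Hm : 0 < m) by (apply Rmin_pos; lra).
    apply (decay _ _ (2 * C0 * N Wv + N Bv) (2 * N Wv) m Hm); try nra.
    intros s Hs. specialize (T1 (- s)). specialize (Hpb (- s)).
    rewrite Rabs_Ropp, (Rabs_right s) in Hpb by lra.
    assert (E1 : exp (l1 * - s) <= exp (- m * s)).
    { apply exp_le_mono. assert (m <= l1) by apply Rmin_l. nra. }
    assert (E2 : exp (l2 * - s) <= exp (- m * s)).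
    { apply exp_le_mono. assert (m <= l2) by apply Rmin_r. nra. }
    pose proof (exp_pos (l1 * - s)). pose proof (exp_pos (l2 * - s)).
    assert (Rabs (pp l1 l2 (- s)) * N Wv <= 2 * exp (- m * s) * (C0 + s) * N Wv).
    { apply Rmult_le_compat_r; auto. eapply Rle_trans; [exact Hpb|].
      apply Rmult_le_compat_r; lra. }
    assert (exp (l2 * - s) * N Bv <= exp (- m * s) * N Bv) by (apply Rmult_le_compat_r; auto).
    nra.
Qed.

Lemma STRUCT {n} (x : R -> Cn n) k1 k2 : C2vec x ->
  (forall t i b, Derive (Derive (fun s => comp (x s) i b)) t
       - (k1 + k2) * Derive (fun s => comp (x s) i b) t + k1 * k2 * comp (x t) i b = 0) ->
  exists Wv, forall t, x t = vadd (rsc (pp k1 k2 t) Wv) (rsc (exp (k2 * t)) (x 0)).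
Proof.
  intros Hx HO. pose proof (C2vec_comp x Hx) as Hc.
  exists (mkv (fun i b => Derive (fun s => comp (x s) i b) 0 - k2 * comp (x 0) i b)).
  intro t. apply vec_ext; intros i b. rewrite comp_vadd, !comp_rsc, comp_mkv.
  destruct (Hc i b) as [Hd1 [Hd2 _]].
  pose proof (SOL2 k1 k2 (fun s => comp (x s) i b) (Derive (fun s => comp (x s) i b))
    (Derive (Derive (fun s => comp (x s) i b))) (fun t => Derive_correct _ _ (Hd1 t))
    (fun t => Derive_correct _ _ (Hd2 t)) (fun t => HO t i b) t) as E.
  cbv beta in E. rewrite E. ring.
Qed.

Lemma LB {n} (N : Cn n -> R) (HN : is_norm N) a0 a1 a2 l1 l2 (cv : Cn n) L (x : R -> Cn n) :
  a0 <> 0 -> a1 = - a0 * (l1 + l2) -> a2 = a0 * l1 * l2 -> l1 <> 0 -> l2 <> 0 ->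
  C2vec x -> (forall t i, Lop a0 a1 a2 x t i = RtoC 0) ->
  (forall t, N (vsub cv (x t)) <= L) -> N cv <= L.
Proof.
  intros Ha0 Ha1 Ha2 Hl1 Hl2 Hx HL Hb.
  assert (HO : forall t i b, Derive (Derive (fun s => comp (x s) i b)) t
       - (l1 + l2) * Derive (fun s => comp (x s) i b) t + l1 * l2 * comp (x t) i b = 0).
  { intros t i b.
    assert (H : comp (Lop a0 a1 a2 x t) i b = 0) by (unfold comp; rewrite HL; destruct b; reflexivity).
    rewrite comp_Lop, comp_vderiv2, comp_vderiv in H. subst a1 a2.
    apply (Rmult_eq_reg_l a0); [|auto]. rewrite Rmult_0_r. rewrite <- H. ring. }
  destruct (classic (l1 < 0 < l2)) as [Hc|Hc].
  - destruct (STRUCT x l2 l1 Hx) as [Wv HW].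
    { intros t i b. rewrite <- (HO t i b). ring. }
    apply (LB_core N HN cv Wv (x 0) L l2 l1); auto. intros [? ?]; lra.
    intro t; rewrite <- HW. apply Hb.
  - destruct (STRUCT x l1 l2 Hx HO) as [Wv HW].
    apply (LB_core N HN cv Wv (x 0) L l1 l2); auto.
    intro t; rewrite <- HW. apply Hb.
Qed.

Lemma C2r_const (k : R) : C2r (fun _ => k).
Proof.
  assert (HD : Derive (fun _ : R => k) = fun _ => 0)
    by (apply functional_extensionality; intro; apply Derive_const).
  split; [|split]; intro t.
  - apply ex_derive_const.
  - rewrite HD. apply ex_derive_const.
  - rewrite HD. replace (Derive (fun _ : R => 0)) with (fun _ : R => 0)
      by (apply functional_extensionality; intro; symmetry; apply Derive_const).
    apply continuous_const.
Qed.

Theorem corollary4p2 :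
  forall (n : nat), (1 <= n)%nat ->
  forall (N : Cn n -> R), is_norm N ->
  forall (a0 a1 a2 l1 l2 : R),
    a0 <> 0 ->
    (forall z : R, a0 * z ^ 2 + a1 * z + a2 = a0 * (z - l1) * (z - l2)) ->
    l1 <> 0 -> l2 <> 0 ->
    Ulam_stable N a0 a1 a2 /\
    is_min_Ulam_constant N a0 a1 a2 (1 / Rabs (a0 * l1 * l2)).
Proof.
  intros n Hn N HN a0 a1 a2 l1 l2 Ha0 Hfac Hl1 Hl2.
  destruct n as [|m]; [lia|].
  destruct (NEQ _ N HN) as [c [K HE]].
  assert (Ha2 : a2 = a0 * l1 * l2) by (specialize (Hfac 0); ring_simplify in Hfac; lra).
  assert (Ha1 : a1 = - a0 * (l1 + l2)).
  { specialize (Hfac 1). ring_simplify in Hfac. rewrite Ha2 in Hfac. lra. }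
  assert (Hpos : 0 < Rabs (a0 * l1 * l2))
    by (apply Rabs_pos_lt; repeat apply Rmult_integral_contrapositive_currified; auto).
  assert (HB : is_Ulam_constant N a0 a1 a2 (1 / Rabs (a0 * l1 * l2))).
  { split. { unfold Rdiv; rewrite Rmult_1_l; apply Rinv_0_lt_compat; auto. }
    intros eps Heps xi Hxi Hb. exact (EX N HN c K HE a0 a1 a2 l1 l2 Ha0 Ha1 Ha2 Hl1 Hl2 eps Heps xi Hxi Hb). }
  split; [exists (1 / Rabs (a0 * l1 * l2)); exact HB|]. split; [exact HB|].
  intros L HLt [HL HUL].
  assert (HNe1 : 0 < N e1).
  { destruct (Rle_lt_or_eq_dec 0 (N e1) (N_ge0 N HN _)) as [H|H]; auto.
    pose proof (Defs.norm_definite _ HN _ (eq_sym H) Fin.F1) as H1.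
    simpl in H1. unfold RtoC in H1. injection H1. lra. }
  pose (cv := rsc (/ (Rabs a2 * N e1)) (@e1 m)).
  assert (Ha2p : 0 < Rabs a2) by (rewrite Ha2; auto).
  assert (HNc : N cv = / Rabs a2).
  { unfold cv. rewrite (N_rsc N HN), Rabs_right.
    - field; lra.
    - left; apply Rinv_0_lt_compat, Rmult_lt_0_compat; auto. }
  pose (xi := fun _ : R => cv).
  assert (Hxi : C2vec xi).
  { apply comp_C2vec. intros i b. exact (C2r_const (comp cv i b)). }
  assert (HLop : forall t, Lop a0 a1 a2 xi t = rsc a2 cv).
  { intro t. apply vec_ext; intros i b.
    rewrite comp_Lop, comp_vderiv2, comp_vderiv, comp_rsc.
    assert (HD : Derive (fun s : R => comp (xi s) i b) = fun _ => 0).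
    { apply functional_extensionality; intro s.
      change (Derive (fun _ => comp cv i b) s = 0); apply Derive_const. }
    rewrite HD. rewrite Derive_const. change (comp (xi t) i b) with (comp cv i b). ring. }
  destruct (HUL 1 Rlt_0_1 xi Hxi) as [x [Hx [HLx Hbx]]].
  { intro t. rewrite HLop, (N_rsc N HN), HNc. right; field; lra. }
  pose proof (LB N HN a0 a1 a2 l1 l2 cv (L * 1) x Ha0 Ha1 Ha2 Hl1 Hl2 Hx HLx Hbx) as H.
  rewrite HNc in H. rewrite Ha2 in H. unfold Rdiv in HLt. lra.
Qed.
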